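(* Let $\langle X,d\rangle$ be a metric space with completion $\langle\widehat{X},\widehat{d}\rangle$. The following are equivalent: (1) $\widehat{X}$ is cofinally Bourbaki quasi-complete; (2) $\widehat{X}$ is cofinally Bourbaki complete and every CBC-regular function from $X$ to any metric space $\langle Y,\rho\rangle$ maps cofinally Bourbaki quasi-Cauchy sequences to cofinally Bourbaki-Cauchy sequences; (3) $\widehat{X}$ is cofinally Bourbaki complete and every real-valued CBC-regular function on $X$ maps cofinally Bourbaki quasi-Cauchy sequences to cofinally Bourbaki-Cauchy sequences; (4) $\widehat{X}$ is cofinally Bourbaki complete and every cofinally Bourbaki quasi-Cauchy sequence in $X$ is cofinally Bourbaki-Cauchy.
   Context: For $\varepsilon>0$, an $\varepsilon$-chain joining $x,y$ is a finite sequence $x=x_0,\dots,x_n=y$ with consecutive distances $<\varepsilon$. A sequence $\langle x_n\rangle$ in a metric space is cofinally Bourbaki quasi-Cauchy if for every $\varepsilon>0$ there is an infinite $N_\varepsilon\subseteq\mathbb{N}$ such that any $x_j,x_k$ with $j,k\in N_\varepsilon$ can be joined by an $\varepsilon$-chain in that space; a space is cofinally Bourbaki quasi-complete if every such sequence has a cluster point. In a metric space $\langle Y,\rho\rangle$ let $S^1_\rho(p,\varepsilon)$ be the open $\varepsilon$-ball about $p$ and $S^{m}_\rho(p,\varepsilon)=\{y:\rho(y,S^{m-1}_\rho(p,\varepsilon))<\varepsilon\}$; a sequence $\langle y_n\rangle$ is cofinally Bourbaki-Cauchy if for every $\varepsilon>0$ there exist an infinite $N_\varepsilon\subseteq\mathbb{N}$,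 $m\in\mathbb{N}$, $p\in Y$ with $y_n\in S^m_\rho(p,\varepsilon)$ for all $n\in N_\varepsilon$. A space is cofinally Bourbaki complete if every cofinally Bourbaki-Cauchy sequence has a cluster point. A function is CBC-regular if it maps cofinally Bourbaki-Cauchy sequences to cofinally Bourbaki-Cauchy sequences. *)

(* Defs.v *)
From Stdlib Require Import Reals Lra.
Open Scope R_scope.

Record is_metric (T : Type) (d : T -> T -> R) : Prop := {
  met_nonneg : forall x y, 0 <= d x y;
  met_zero   : forall x y, d x y = 0 <-> x = y;
  met_sym    : forall x y, d x y = d y x;
  met_tri    : forall x y z, d x z <= d x y + d y z
}.

Definition infinite_nat (N : nat -> Prop) : Prop :=
  forall m : nat, exists n : nat, (m <= n)%nat /\ N n.

Definition eps_chain {T : Type} (d : T -> T -> R) (eps : R) (x y : T) : Prop :=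
  exists (n : nat) (c : nat -> T),
    c 0%nat = x /\ c n = y /\ forall i, (i < n)%nat -> d (c i) (c (S i)) < eps.

Definition cofinally_Bourbaki_quasi_Cauchy {T : Type} (d : T -> T -> R)
  (x : nat -> T) : Prop :=
  forall eps, 0 < eps ->
    exists N : nat -> Prop, infinite_nat N /\
      forall j k, N j -> N k -> eps_chain d eps (x j) (x k).

Definition cluster_point {T : Type} (d : T -> T -> R) (x : nat -> T) (p : T) : Prop :=
  forall eps, 0 < eps -> forall m : nat, exists n, (m <= n)%nat /\ d (x n) p < eps.

Definition has_cluster_point {T : Type} (d : T -> T -> R) (x : nat -> T) : Prop :=
  exists p, cluster_point d x p.

Definition cofinally_Bourbaki_quasi_complete (T : Type) (d : T -> T -> R) : Prop :=
  forall x : nat -> T, cofinally_Bourbaki_quasi_Cauchy d x -> has_cluster_point d x.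

(* Iterated enlargements: Siter d p eps m = S^{m+1}(p, eps).
   S^1 = open ball; S^{m+1} = {y | rho(y, S^m) < eps}, where
   rho(y, A) < eps  iff  some a in A has rho(y, a) < eps (inf < eps). *)
Fixpoint Siter {T : Type} (d : T -> T -> R) (p : T) (eps : R) (m : nat) (y : T) : Prop :=
  match m with
  | O => d p y < eps
  | S m' => exists a, Siter d p eps m' a /\ d y a < eps
  end.

Definition cofinally_Bourbaki_Cauchy {T : Type} (d : T -> T -> R) (x : nat -> T) : Prop :=
  forall eps, 0 < eps ->
    exists (N : nat -> Prop) (m : nat) (p : T), infinite_nat N /\
      forall n, N n -> Siter d p eps m (x n).

Definition cofinally_Bourbaki_complete (T : Type) (d : T -> T -> R) : Prop :=
  forall x : nat -> T, cofinally_Bourbaki_Cauchy d x -> has_cluster_point d x.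

Definition CBC_regular {X Y : Type} (d : X -> X -> R) (rho : Y -> Y -> R)
  (f : X -> Y) : Prop :=
  forall x : nat -> X, cofinally_Bourbaki_Cauchy d x ->
    cofinally_Bourbaki_Cauchy rho (fun n => f (x n)).

Definition cauchy_seq {T : Type} (d : T -> T -> R) (x : nat -> T) : Prop :=
  forall eps, 0 < eps -> exists N, forall m n, (N <= m)%nat -> (N <= n)%nat -> d (x m) (x n) < eps.

Definition converges_to {T : Type} (d : T -> T -> R) (x : nat -> T) (p : T) : Prop :=
  forall eps, 0 < eps -> exists N, forall n, (N <= n)%nat -> d (x n) p < eps.

Definition complete_metric (T : Type) (d : T -> T -> R) : Prop :=
  forall x : nat -> T, cauchy_seq d x -> exists p, converges_to d x p.

Definition is_completion {X Xh : Type} (d : X -> X -> R) (dh : Xh -> Xh -> R)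
  (i : X -> Xh) : Prop :=
  is_metric Xh dh /\ complete_metric Xh dh /\
  (forall x y, dh (i x) (i y) = d x y) /\
  (forall z eps, 0 < eps -> exists x, dh z (i x) < eps).

Definition real_dist (a b : R) : R := Rabs (a - b).

(* Main.v *)
Require Import Defs.
From Stdlib Require Import Reals Lra Lia ZArith IndefiniteDescription ClassicalDescription Classical.
Open Scope R_scope.

Lemma nat_above (r : R) : exists M : nat, r < INR M.
Proof.
  destruct (archimed r) as [H1 H2].
  destruct (Z_le_gt_dec 0 (up r)) as [Hz|Hz].
  - exists (Z.to_nat (up r)). rewrite INR_IZR_INZ, Z2Nat.id by exact Hz. lra.
  - exists 0%nat. simpl. assert (Hz2 : (up r < 0)%Z) by lia. apply IZR_lt in Hz2. lra.
Qed.

Lemma inv_small (e : R) : 0 < e -> exists M : nat, forall n, (M <= n)%nat -> / INR (S n) < e.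
Proof.
  intros He. destruct (nat_above (/ e)) as [M HM]. exists M. intros n Hn.
  assert (HM' : INR M <= INR n) by (apply le_INR; exact Hn).
  rewrite S_INR. assert (0 < / e) by (apply Rinv_0_lt_compat; lra).
  assert (0 <= INR M) by apply pos_INR.
  replace e with (/ / e) by (field; lra).
  apply Rinv_lt_contravar; nra.
Qed.

Lemma met_refl (T : Type) (d : T -> T -> R) (hm : is_metric T d) x : d x x = 0.
Proof. apply (met_zero _ _ hm). reflexivity. Qed.

Lemma Siter_pos (T : Type) (d : T -> T -> R) (hm : is_metric T d) p e m y :
  Siter d p e m y -> 0 < e.
Proof.
  revert y; induction m; simpl; intros y H.
  - pose proof (met_nonneg _ _ hm p y). lra.
  - destruct H as [a [Ha _]]. eauto.
Qed.

Lemma Siter_S (T : Type) (d : T -> T -> R) (hm : is_metric T d) p e m y :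
  Siter d p e m y -> Siter d p e (S m) y.
Proof.
  intros H. simpl. exists y. split; auto. rewrite (met_refl _ _ hm).
  eapply Siter_pos; eauto.
Qed.

Lemma Siter_le (T : Type) (d : T -> T -> R) (hm : is_metric T d) p e m m' y :
  (m <= m')%nat -> Siter d p e m y -> Siter d p e m' y.
Proof.
  induction 1; auto. intros H0. apply Siter_S; auto.
Qed.

Lemma Siter_left (T : Type) (d : T -> T -> R) (hm : is_metric T d) p b e m y :
  d p b < e -> Siter d b e m y -> Siter d p e (S m) y.
Proof.
  intros Hpb. revert y; induction m; simpl; intros y H.
  - exists b. split; auto. rewrite (met_sym _ _ hm). exact H.
  - destruct H as [a [Ha Hya]]. exists a. split; auto. apply IHm. exact Ha.
Qed.

Lemma Siter_rev (T : Type) (d : T -> T -> R) (hm : is_metric T d) p e m y :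
  Siter d p e m y -> Siter d y e m p.
Proof.
  revert y; induction m; simpl; intros y H.
  - rewrite (met_sym _ _ hm). exact H.
  - destruct H as [a [Ha Hya]]. apply (Siter_left _ _ hm y a); auto.
Qed.

Lemma Siter_trans (T : Type) (d : T -> T -> R) (hm : is_metric T d) p q e m m' y :
  Siter d p e m q -> Siter d q e m' y -> Siter d p e (S (m' + m)) y.
Proof.
  intros Hq. revert y; induction m'; simpl; intros y H.
  - exists q. split; auto. rewrite (met_sym _ _ hm). exact H.
  - destruct H as [a [Ha Hya]]. exists a. split; [apply IHm'; exact Ha | exact Hya].
Qed.

Lemma Siter_bound (T : Type) (d : T -> T -> R) (hm : is_metric T d) p e m y :
  Siter d p e m y -> d p y < INR (S m) * e.
Proof.
  revert y; induction m; simpl; intros y H.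
  - lra.
  - destruct H as [a [Ha Hya]]. specialize (IHm a Ha).
    pose proof (met_tri _ _ hm p a y). rewrite (met_sym _ _ hm a y) in H.
    destruct m; simpl in *; lra.
Qed.

Lemma Siter_iso (X Y : Type) (d : X -> X -> R) (dh : Y -> Y -> R) (i : X -> Y)
  (hi : forall x y, dh (i x) (i y) = d x y) p e m y :
  Siter d p e m y -> Siter dh (i p) e m (i y).
Proof.
  revert y; induction m; simpl; intros y H.
  - rewrite hi; exact H.
  - destruct H as [a [Ha Hya]]. exists (i a). split; auto. rewrite hi; auto.
Qed.

Lemma chain_ext (T : Type) (d : T -> T -> R) e x a y :
  eps_chain d e x a -> d a y < e -> eps_chain d e x y.
Proof.
  intros [n [c [H0 [Hn Hs]]]] Hy.
  exists (S n), (fun t => if Nat.leb t n then c t else y).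
  split; [simpl; exact H0|]. split.
  - assert (Nat.leb (S n) n = false) by (apply Nat.leb_gt; lia). rewrite H; reflexivity.
  - intros t Ht. destruct (Nat.eq_dec t n) as [->|Hne].
    + rewrite Nat.leb_refl. assert (Nat.leb (S n) n = false) by (apply Nat.leb_gt; lia).
      rewrite H, Hn. exact Hy.
    + assert (Nat.leb t n = true) by (apply Nat.leb_le; lia).
      assert (Nat.leb (S t) n = true) by (apply Nat.leb_le; lia).
      rewrite H, H1. apply Hs. lia.
Qed.

Lemma Siter_chain (T : Type) (d : T -> T -> R) (hm : is_metric T d) p e m y :
  Siter d p e m y -> eps_chain d e p y.
Proof.
  revert y; induction m; simpl; intros y H.
  - exists 1%nat, (fun t => match t with O => p | _ => y end).
    split; auto. split; auto. intros t Ht. assert (t = 0%nat) by lia. subst. exact H.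
  - destruct H as [a [Ha Hya]]. apply chain_ext with a; auto.
    rewrite (met_sym _ _ hm). exact Hya.
Qed.

Lemma chain_Siter (T : Type) (d : T -> T -> R) (hm : is_metric T d) e x y :
  0 < e -> eps_chain d e x y -> exists m, Siter d x e m y.
Proof.
  intros He [n [c [H0 [Hn Hs]]]].
  assert (Hall : forall t, (t < n)%nat -> Siter d x e t (c (S t))).
  { induction t; intros Ht.
    - simpl. rewrite <- H0. apply Hs. lia.
    - simpl. exists (c (S t)). split. apply IHt; lia.
      rewrite (met_sym _ _ hm). apply Hs. lia. }
  destruct n as [|n].
  - exists 0%nat. simpl. rewrite <- H0, <- Hn, (met_refl _ _ hm). exact He.
  - exists n. rewrite <- Hn. apply Hall. lia.
Qed.

Lemma CBC_CBqC (T : Type) (d : T -> T -> R) (hm : is_metric T d) x :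
  cofinally_Bourbaki_Cauchy d x -> cofinally_Bourbaki_quasi_Cauchy d x.
Proof.
  intros H e He. destruct (H e He) as [N [m [p [HN Hall]]]].
  exists N. split; auto. intros j k Hj Hk.
  apply (Siter_chain _ _ hm) with (m := S (m + m)).
  apply (Siter_trans _ _ hm) with p. apply (Siter_rev _ _ hm); auto. auto.
Qed.

Lemma complete_of_quasi (T : Type) (d : T -> T -> R) (hm : is_metric T d) :
  cofinally_Bourbaki_quasi_complete T d -> cofinally_Bourbaki_complete T d.
Proof. intros H x Hx. apply H. apply CBC_CBqC; auto. Qed.

Lemma real_metric : is_metric R real_dist.
Proof.
  unfold real_dist; constructor.
  - intros; apply Rabs_pos.
  - intros x y; split; intros H.
    + destruct (Req_dec (x - y) 0). lra. apply Rabs_no_R0 in H0. contradiction.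
    + subst. replace (y - y) with 0 by ring. apply Rabs_R0.
  - intros; apply Rabs_minus_sym.
  - intros x y z. replace (x - z) with ((x - y) + (y - z)) by ring. apply Rabs_triang.
Qed.

Lemma least_ex (P : nat -> Prop) : (exists k, P k) -> exists k, P k /\ forall k', P k' -> (k <= k')%nat.
Proof.
  intros [k0 Hk0]. apply NNPP. intros Hno.
  assert (forall n, ~ P n).
  { intros n. induction n as [n IH] using lt_wf_ind. intros Pn. apply Hno.
    exists n. split; auto. intros k' Pk'. destruct (le_lt_dec n k'); auto.
    exfalso. apply (IH k'); auto. }
  apply (H k0); auto.
Qed.

Definition lz (P : nat -> Prop) : nat :=
  match excluded_middle_informative (exists k, P k) with
  | left H => proj1_sig (constructive_indefinite_description _ (least_ex P H))
  | right _ => 0%nat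
  end.

Lemma lz_spec (P : nat -> Prop) : (exists k, P k) -> P (lz P) /\ forall k, P k -> (lz P <= k)%nat.
Proof.
  intros H. unfold lz. destruct (excluded_middle_informative _); [|contradiction].
  destruct (constructive_indefinite_description _ _) as [k Hk]. exact Hk.
Qed.

Lemma lz_le (P : nat -> Prop) k : P k -> (lz P <= k)%nat.
Proof. intros H. apply lz_spec; eauto. Qed.

Lemma lz_none (P : nat -> Prop) : ~ (exists k, P k) -> lz P = 0%nat.
Proof. intros H. unfold lz. destruct (excluded_middle_informative _); [contradiction|auto]. Qed.

Lemma pigeon (Q : nat -> nat -> Prop) M : forall (N : nat -> Prop), infinite_nat N ->
  (forall n, N n -> exists j, (j <= M)%nat /\ Q j n) ->
  exists j, (j <= M)%nat /\ infinite_nat (fun n => N n /\ Q j n).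
Proof.
  induction M; intros N HN H.
  - exists 0%nat. split; auto. intros m. destruct (HN m) as [n [Hmn Hn]].
    exists n. split; auto. split; auto. destruct (H n Hn) as [j [Hj Hq]].
    assert (j = 0%nat) by lia. subst; auto.
  - destruct (classic (infinite_nat (fun n => N n /\ Q (S M) n))) as [Hi|Hi].
    + exists (S M); split; auto.
    + unfold infinite_nat in Hi. apply not_all_ex_not in Hi. destruct Hi as [b Hb].
      destruct (IHM (fun n => N n /\ (b <= n)%nat)) as [j [Hj Hinf]].
      * intros m. destruct (HN (max m b)) as [n [Hmn Hn]]. exists n. split; [lia|split;[auto|lia]].
      * intros n [Hn Hbn]. destruct (H n Hn) as [j [Hj Hq]].
        destruct (Nat.eq_dec j (S M)) as [->|Hne].
        -- exfalso. apply Hb. exists n. auto.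
        -- exists j. split; [lia|auto].
      * exists j. split; [lia|]. intros m. destruct (Hinf m) as [n [Hmn [[Hn _] Hq]]].
        exists n. auto.
Qed.

Lemma R_Siter e M : 0 < e -> forall y, 0 <= y < INR (S M) * (e/2) -> Siter real_dist 0 e M y.
Proof.
  intros He. induction M; intros y [Hy1 Hy2].
  - simpl. unfold real_dist. rewrite Rabs_minus_sym, Rabs_right by lra. simpl in Hy2. lra.
  - destruct (Rlt_dec y (INR (S M) * (e/2))) as [Hl|Hl].
    + apply (Siter_S _ _ real_metric). apply IHM. lra.
    + simpl. exists (y - e/2). split.
      * apply Rnot_lt_le in Hl. apply IHM. rewrite !S_INR in *. pose proof (pos_INR M).
        split; nra.
      * unfold real_dist. replace (y - (y - e/2)) with (e/2) by ring.
        rewrite Rabs_right by lra. lra.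
Qed.

Lemma P1_P4 (X : Type) (d : X -> X -> R) (Xh : Type) (dh : Xh -> Xh -> R)
  (i : X -> Xh) (hd : is_metric X d) (hcomp : is_completion d dh i) :
  cofinally_Bourbaki_quasi_complete Xh dh ->
  forall x, cofinally_Bourbaki_quasi_Cauchy d x -> cofinally_Bourbaki_Cauchy d x.
Proof.
  destruct hcomp as [hm [hc [hi hdense]]].
  intros H1 x Hx.
  assert (Hz : cofinally_Bourbaki_quasi_Cauchy dh (fun n => i (x n))).
  { intros e He. destruct (Hx e He) as [N [HN Hch]]. exists N; split; auto.
    intros j k Hj Hk. destruct (Hch j k Hj Hk) as [n [c [H0 [Hn Hs]]]].
    exists n, (fun t => i (c t)). split; [rewrite H0; auto|]. split; [rewrite Hn; auto|].
    intros t Ht; rewrite hi; auto. }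
  destruct (H1 _ Hz) as [q Hq].
  intros e He. destruct (hdense q (e/2)) as [p Hp]; [lra|].
  exists (fun n => dh (i (x n)) q < e/2), 0%nat, p. split.
  - intros m. destruct (Hq (e/2) ltac:(lra) m) as [n [Hmn Hn]]. exists n; auto.
  - intros n Hn. simpl. rewrite <- hi.
    pose proof (met_tri _ _ hm (i p) q (i (x n))) as T.
    rewrite (met_sym _ _ hm (i p) q) in T. rewrite (met_sym _ _ hm q (i (x n))) in T. lra.
Qed.

Lemma Siter_approx (X : Type) (d : X -> X -> R) (Xh : Type) (dh : Xh -> Xh -> R)
  (i : X -> Xh) (hm : is_metric Xh dh) (hi : forall x y, dh (i x) (i y) = d x y)
  (hdense : forall z eps, 0 < eps -> exists x, dh z (i x) < eps) q e m :
  forall w p y δ, Siter dh q e m w -> dh q (i p) < δ -> dh w (i y) < δ ->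
  Siter d p (e + 2 * δ) m y.
Proof.
  induction m; intros w p y δ H Hp Hy.
  - simpl in *. rewrite <- hi.
    pose proof (met_tri _ _ hm (i p) q (i y)).
    pose proof (met_tri _ _ hm q w (i y)).
    rewrite (met_sym _ _ hm (i p) q) in H0. lra.
  - simpl in H. destruct H as [a [Ha Hwa]].
    assert (Hd : 0 < δ) by (pose proof (met_nonneg _ _ hm q (i p)); lra).
    destruct (hdense a δ Hd) as [a' Ha'].
    simpl. exists a'. split.
    + apply (IHm a); auto.
    + rewrite <- hi.
      pose proof (met_tri _ _ hm (i y) w (i a')).
      pose proof (met_tri _ _ hm w a (i a')).
      rewrite (met_sym _ _ hm (i y) w) in H. lra.
Qed.

Lemma P4_P1 (X : Type) (d : X -> X -> R) (Xh : Type) (dh : Xh -> Xh -> R)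
  (i : X -> Xh) (hd : is_metric X d) (hcomp : is_completion d dh i) :
  cofinally_Bourbaki_complete Xh dh ->
  (forall x, cofinally_Bourbaki_quasi_Cauchy d x -> cofinally_Bourbaki_Cauchy d x) ->
  cofinally_Bourbaki_quasi_complete Xh dh.
Proof.
  destruct hcomp as [hm [hc [hi hdense]]].
  intros Hc H4 z Hz.
  assert (Hex : forall n, exists a, dh (z n) (i a) < / INR (S n)).
  { intros n; apply hdense; apply Rinv_0_lt_compat, lt_0_INR; lia. }
  destruct (functional_choice _ Hex) as [x Hx].
  assert (Hxq : cofinally_Bourbaki_quasi_Cauchy d x).
  { intros e He. destruct (Hz (e/2)) as [N [HN Hch]]; [lra|].
    destruct (inv_small (e/4)) as [M0 HM0]; [lra|].
    exists (fun n => N n /\ (M0 <= n)%nat). split.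
    - intros m. destruct (HN (max m M0)) as [n [Hn HNn]]. exists n; split; [lia| split; [auto|lia]].
    - intros j k [Hj Hj'] [Hk Hk'].
      destruct (chain_Siter _ _ hm (e/2) _ _ ltac:(lra) (Hch j k Hj Hk)) as [m Hm].
      apply (Siter_chain _ _ hd) with m.
      replace e with (e/2 + 2*(e/4)) by field.
      apply (Siter_approx X d Xh dh i hm hi hdense (z j) (e/2) m (z k)); auto.
      + specialize (Hx j). specialize (HM0 j Hj'). lra.
      + specialize (Hx k). specialize (HM0 k Hk'). lra. }
  specialize (H4 x Hxq).
  assert (Hix : cofinally_Bourbaki_Cauchy dh (fun n => i (x n))).
  { intros e He. destruct (H4 e He) as [N [m [p [HN Hall]]]].
    exists N, m, (i p). split; auto. intros n Hn. apply (Siter_iso X Xh d dh i hi); auto. }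
  destruct (Hc _ Hix) as [q Hq]. exists q.
  intros e He m. destruct (inv_small (e/2)) as [M0 HM0]; [lra|].
  destruct (Hq (e/2) ltac:(lra) (max m M0)) as [n [Hn Hd]].
  exists n; split; [lia|].
  pose proof (met_tri _ _ hm (z n) (i (x n)) q).
  specialize (Hx n). specialize (HM0 n ltac:(lia)). lra.
Qed.

Lemma P3_P4 (X : Type) (d : X -> X -> R) (hd : is_metric X d) :
  (forall f : X -> R, CBC_regular d real_dist f ->
     forall x, cofinally_Bourbaki_quasi_Cauchy d x ->
       cofinally_Bourbaki_Cauchy real_dist (fun n => f (x n))) ->
  forall x, cofinally_Bourbaki_quasi_Cauchy d x -> cofinally_Bourbaki_Cauchy d x.
Proof.
  intros H3 x Hx.
  destruct (classic (exists e0, 0 < e0 /\ forall N m p, infinite_nat N ->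
     (forall n, N n -> Siter d p e0 m (x n)) -> False)) as [[e0 [He0 Hbad]] | Hno].
  2: { intros e He. apply NNPP. intros Hc. apply Hno. exists e; split; auto.
       intros N m p HN Hall. apply Hc. exists N, m, p. auto. }
  exfalso.
  set (P := fun y k => exists j, (j <= k)%nat /\ Siter d (x j) e0 k y).
  set (f := fun y => INR (lz (P y))).
  assert (Hreg : CBC_regular d real_dist f).
  { intros w Hw e He. destruct (Hw e0 He0) as [N' [m [q [HN' Hall]]]].
    destruct (HN' 0%nat) as [n0 [_ Hn0]].
    assert (Hbd : exists K : nat, forall n, N' n -> (lz (P (w n)) <= K)%nat).
    { destruct (classic (exists k, P (w n0) k)) as [[k [j [Hjk Hs]]] | Hnone].
      - exists (S (m + S (m + k))). intros n Hn.
        apply lz_le. exists j. split; [lia|].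
        apply (Siter_trans _ _ hd) with q; [|auto].
        apply (Siter_trans _ _ hd) with (w n0); auto.
        apply (Siter_rev _ _ hd); auto.
      - exists 0%nat. intros n Hn. rewrite lz_none; auto.
        intros [k [j [Hjk Hs]]]. apply Hnone. exists (S (m + S (m + k))). exists j.
        split; [lia|].
        apply (Siter_trans _ _ hd) with q; [|auto].
        apply (Siter_trans _ _ hd) with (w n); auto.
        apply (Siter_rev _ _ hd); auto. }
    destruct Hbd as [K HK].
    destruct (nat_above (INR K * 2 / e)) as [M HM].
    assert (HKM : INR K < INR M * (e/2)).
    { apply Rmult_lt_compat_r with (r := e/2) in HM; [|lra].
      replace (INR K * 2 / e * (e/2)) with (INR K) in HM by (field; lra). lra. }
    exists N', M, 0. split; auto. intros n Hn. apply R_Siter; auto. split.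
    + apply pos_INR.
    + unfold f. apply Rle_lt_trans with (INR K). apply le_INR; auto.
      rewrite S_INR. lra. }
  destruct (H3 f Hreg x Hx 1 Rlt_0_1) as [N'' [m [p [HN'' Hall]]]].
  destruct (nat_above (Rabs p + INR (S m))) as [M HM].
  assert (Hpig : forall n, N'' n -> exists j, (j <= M)%nat /\ Siter d (x j) e0 M (x n)).
  { intros n Hn. specialize (Hall n Hn). apply (Siter_bound _ _ real_metric) in Hall.
    unfold real_dist, f in Hall.
    assert (INR (lz (P (x n))) - p <= Rabs (p - INR (lz (P (x n))))).
    { rewrite Rabs_minus_sym. apply Rle_abs. }
    pose proof (Rle_abs p).
    assert (HL : (lz (P (x n)) < M)%nat) by (apply INR_lt; lra).
    destruct (lz_spec (P (x n))) as [HP _].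
    { exists n, n. split; auto. apply (Siter_le _ _ hd) with 0%nat; [lia|].
      simpl; rewrite (met_refl _ _ hd); auto. }
    destruct HP as [j [Hj Hs]]. exists j. split; [lia|].
    apply (Siter_le _ _ hd) with (lz (P (x n))); [lia|auto]. }
  destruct (pigeon (fun j n => Siter d (x j) e0 M (x n)) M N'' HN'' Hpig) as [j [Hj Hinf]].
  apply (Hbad _ M (x j) Hinf). intros n [_ Hn]; auto.
Qed.

Theorem mainTheorem11 (X : Type) (d : X -> X -> R) (Xh : Type) (dh : Xh -> Xh -> R)
  (i : X -> Xh) (hd : is_metric X d) (hcomp : is_completion d dh i) :
  let P1 := cofinally_Bourbaki_quasi_complete Xh dh in
  let P2 := cofinally_Bourbaki_complete Xh dh /\
     (forall (Y : Type) (rho : Y -> Y -> R), is_metric Y rho ->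
        forall f : X -> Y, CBC_regular d rho f ->
        forall x : nat -> X, cofinally_Bourbaki_quasi_Cauchy d x ->
          cofinally_Bourbaki_Cauchy rho (fun n => f (x n))) in
  let P3 := cofinally_Bourbaki_complete Xh dh /\
     (forall f : X -> R, CBC_regular d real_dist f ->
        forall x : nat -> X, cofinally_Bourbaki_quasi_Cauchy d x ->
          cofinally_Bourbaki_Cauchy real_dist (fun n => f (x n))) in
  let P4 := cofinally_Bourbaki_complete Xh dh /\
     (forall x : nat -> X, cofinally_Bourbaki_quasi_Cauchy d x ->
          cofinally_Bourbaki_Cauchy d x) in
  (P1 <-> P2) /\ (P1 <-> P3) /\ (P1 <-> P4).
Proof.
  cbv zeta.
  pose proof (proj1 hcomp) as hm.
  pose proof (P1_P4 X d Xh dh i hd hcomp) as h14.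
  pose proof (P4_P1 X d Xh dh i hd hcomp) as h41.
  pose proof (P3_P4 X d hd) as h34.
  assert (A : cofinally_Bourbaki_quasi_complete Xh dh -> cofinally_Bourbaki_complete Xh dh)
    by (apply complete_of_quasi; auto).
  split; [|split].
  - split.
    + intros H1. split; [auto|]. intros Y rho _ f Hf x Hx. apply Hf. apply h14; auto.
    + intros [Hc H2]. apply h41; auto. apply h34. intros f Hf. apply H2; auto; apply real_metric.
  - split.
    + intros H1. split; [auto|]. intros f Hf x Hx. apply Hf. apply h14; auto.
    + intros [Hc H3]. apply h41; auto.
  - split.
    + intros H1. split; auto.
    + intros [Hc H4]. apply h41; auto.
Qed.
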